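(* Let $A$ be a ring, $\delta=(\delta_1,\ldots,\delta_n)$ an $n$-tuple of pairwise commuting derivations of $A$, $d_i\in\mathbb{N}\cup\{\infty\}$, $I=\{\alpha\in\mathbb{N}^n\mid\alpha_i\le d_i\ \forall i\}$, and let $\{x^{[\alpha]}\mid\alpha\in I\}$ be a $\delta$-descent. Then for each $\alpha\in I$, $N_\alpha=\bigoplus_{0\le\beta\le\alpha}A^\delta x^{[\beta]}=\bigoplus_{0\le\beta\le\alpha}x^{[\beta]}A^\delta$.
   Context: $A^\delta=\bigcap_i\ker\delta_i$; $N_\alpha=\bigcap_{i=1}^n\ker\delta_i^{\alpha_i+1}$; $\beta\le\alpha$ means $\beta_i\le\alpha_i$ for all $i$; $\delta^\alpha=\delta_1^{\alpha_1}\cdots\delta_n^{\alpha_n}$. A family $\{x^{[\alpha]}\mid\alpha\in I\}$ is a $\delta$-descent if $x^{[0]}=1$ and $\delta^\alpha(x^{[\beta]})=x^{[\beta-\alpha]}$ for all $\alpha\in\mathbb{N}^n$, $\beta\in I$, where $x^{[\gamma]}:=0$ for $\gamma\in\mathbb{Z}^n\setminus\mathbb{N}^n$. *)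

(* Defs.v *)
From mathcomp Require Import all_boot all_order all_algebra.
Set Implicit Arguments. Unset Strict Implicit. Unset Printing Implicit Defensive.
Import GRing.Theory.
Local Open Scope ring_scope.

Definition mindex (n : nat) := {ffun 'I_n -> nat}.

Definition mzero n : mindex n := [ffun => 0%N].
Definition mle n (b a : mindex n) : bool := [forall i, (b i <= a i)%N].
Definition msub n (b a : mindex n) : mindex n := [ffun i => (b i - a i)%N].

(* I = {alpha | alpha_i <= d_i}, with d_i in N u {oo}; None encodes oo *)
Definition inI n (d : 'I_n -> option nat) (a : mindex n) : bool :=
  [forall i, if d i is Some k then (a i <= k)%N else true].

(* the finite list of all beta with 0 <= beta <= alpha (duplicate-free) *)
Definition box n (a : mindex n) : seq (mindex n) :=
  [seq b <- [seq [ffun i => nat_of_ord (f i)] | f : {ffun 'I_n -> 'I_(\max_i a i).+1}]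
   | mle b a].

Section Der.
Variable A : pzRingType.

Definition is_derivation (D : A -> A) : Prop :=
  (forall a b, D (a + b) = D a + D b) /\ (forall a b, D (a * b) = D a * b + a * D b).

Variable n : nat.
Variable delta : 'I_n -> A -> A.

Definition dpow (a : mindex n) (y : A) : A :=
  foldr (fun i z => iter (a i) (delta i) z) y (enum 'I_n).

Definition constants (y : A) : Prop := forall i, delta i y = 0.

(* N_alpha = intersection of ker delta_i^(alpha_i + 1) *)
Definition Nset (a : mindex n) (y : A) : Prop :=
  forall i, iter (a i).+1 (delta i) y = 0.

(* delta-descent indexed by I; x^[gamma] := 0 for gamma outside N^n *)
Definition descent (d : 'I_n -> option nat) (x : mindex n -> A) : Prop :=
  x (mzero n) = 1 /\
  forall (a b : mindex n), inI d b ->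
    dpow a (x b) = if mle a b then x (msub b a) else 0.
End Der.

Definition is_dsum (A : pzRingType) (I : eqType) (S : A -> Prop) (s : seq I)
    (M : I -> A -> Prop) : Prop :=
  (forall y, S y <-> exists z : I -> A,
      (forall b, b \in s -> M b (z b)) /\ y = \sum_(b <- s) z b) /\
  (forall z : I -> A, (forall b, b \in s -> M b (z b)) ->
      \sum_(b <- s) z b = 0 -> forall b, b \in s -> z b = 0).

(* Main.v *)
Require Import Defs.
From mathcomp Require Import all_boot all_order all_algebra.
From mathcomp Require Import zify.
Set Implicit Arguments. Unset Strict Implicit. Unset Printing Implicit Defensive.
Import GRing.Theory.

Section Comb.
Variable n : nat.
Implicit Types a b g : mindex n.

Definition msz b : nat := (\sum_i b i)%N.
Definition madd a b : mindex n := [ffun i => (a i + b i)%N].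
Definition munit (i : 'I_n) (m : nat) : mindex n := [ffun j => if j == i then m else 0%N].
Definition mset0 b (i : 'I_n) : mindex n := [ffun j => if j == i then 0%N else b j].

Lemma mleP g b : reflect (forall i, (g i <= b i)%N) (mle g b).
Proof. exact: forallP. Qed.

Lemma mle_refl b : mle b b.
Proof. by apply/mleP. Qed.

Lemma mle0 b : mle (mzero n) b.
Proof. by apply/mleP => i; rewrite ffunE. Qed.

Lemma msubxx b : msub b b = mzero n.
Proof. by apply/ffunP => i; rewrite !ffunE subnn. Qed.

Lemma msz_le g b : mle g b -> (msz g <= msz b)%N.
Proof. by move/mleP => H; apply: leq_sum => i _. Qed.

Lemma msz_eq g b : mle g b -> (msz b <= msz g)%N -> g = b.
Proof.
move/mleP => H Hs; apply/ffunP => i; apply/eqP; rewrite eqn_leq H /=.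
have E : msz b = (msz g + \sum_j (b j - g j))%N.
  rewrite /msz -big_split /=; apply: eq_bigr => j _; by rewrite subnKC.
have : (\sum_j (b j - g j) <= 0)%N by move: Hs; rewrite E; lia.
rewrite (bigD1 i) //= => Hle.
have : (b i - g i <= 0)%N by apply: leq_trans Hle; apply: leq_addr.
by rewrite leqn0 subn_eq0.
Qed.

Lemma msz_unit i m : msz (munit i m) = m.
Proof.
rewrite /msz (bigD1 i) //= ffunE eqxx big1 ?addn0 // => j Hj.
by rewrite ffunE (negbTE Hj).
Qed.

Lemma msz_add a b : msz (madd a b) = (msz a + msz b)%N.
Proof. by rewrite /msz -big_split; apply: eq_bigr => i _; rewrite ffunE. Qed.

Lemma inI_mle d g b : mle g b -> inI d b -> inI d g.
Proof.
move/mleP => H /forallP Hb; apply/forallP => i; have := Hb i.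
by case: (d i) => // k; apply: leq_trans.
Qed.

Lemma mem_box a b : (b \in box a) = mle b a.
Proof.
rewrite /box mem_filter; case Hba: (mle b a) => //=.
apply/mapP; exists [ffun i => inord (b i) : 'I_(\max_i a i).+1]; first by rewrite mem_enum.
apply/ffunP => i; rewrite !ffunE inordK //; rewrite ltnS.
by apply: leq_trans (leq_bigmax i); move/mleP: Hba.
Qed.

Lemma uniq_box a : uniq (box a).
Proof.
rewrite /box filter_uniq // map_inj_uniq ?enum_uniq // => f g E.
apply/ffunP => i; move/ffunP: E => /(_ i); rewrite !ffunE => E; exact: val_inj.
Qed.

End Comb.

Local Open Scope ring_scope.
Definition addf (A : pzRingType) (f : A -> A) := forall y z, f (y + z) = f y + f z.

Lemma addf0 (A : pzRingType) (f : A -> A) : addf f -> f 0 = 0.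
Proof. by move=> H; apply: (@addrI _ (f 0)); rewrite -H !addr0. Qed.

Lemma addfN (A : pzRingType) (f : A -> A) : addf f -> forall y, f (- y) = - f y.
Proof. by move=> H y; apply: (@addrI _ (f y)); rewrite -H !subrr addf0. Qed.

Lemma addfB (A : pzRingType) (f : A -> A) : addf f -> forall y z, f (y - z) = f y - f z.
Proof. by move=> H y z; rewrite H addfN. Qed.

Lemma addf_sum (A : pzRingType) (f : A -> A) (I : Type) (s : seq I) (F : I -> A) :
  addf f -> f (\sum_(b <- s) F b) = \sum_(b <- s) f (F b).
Proof.
move=> H; elim: s => [|b s IH]; first by rewrite !big_nil addf0.
by rewrite !big_cons H IH.
Qed.

Lemma addf_iter (A : pzRingType) (f : A -> A) m : addf f -> addf (iter m f).
Proof. move=> H; elim: m => [//|m IH] y z /=; by rewrite IH H. Qed.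

Lemma sum_if1 (A : pzRingType) (I : eqType) (s : seq I) (g : I) (F : I -> A) :
  uniq s -> \sum_(b <- s) (if b == g then F b else 0) = if g \in s then F g else 0.
Proof.
elim: s => [|b s IH] /=; first by rewrite big_nil.
case/andP => Hb Hu; rewrite big_cons IH // in_cons.
case: (eqVneq b g) => [<-|Hne]. by rewrite (negbTE Hb) addr0 orTb. 
by rewrite add0r.
Qed.

Section Der2.
Variable A : pzRingType.
Variable n : nat.
Variable delta : 'I_n -> A -> A.
Hypothesis Hder : forall i, is_derivation (delta i).
Hypothesis Hcomm : forall i j y, delta i (delta j y) = delta j (delta i y).

Lemma dadd i : addf (delta i). Proof. by case: (Hder i). Qed.

Lemma iter_comm1 i j m z : iter m (delta i) (delta j z) = delta j (iter m (delta i) z).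
Proof. elim: m => [//|m IH] /=; by rewrite IH Hcomm. Qed.

Lemma iter_comm i j m k z :
  iter m (delta i) (iter k (delta j) z) = iter k (delta j) (iter m (delta i) z).
Proof. elim: k => [//|k IH] /=; by rewrite iter_comm1 IH. Qed.

Lemma iter_foldr (a : mindex n) i m z s :
  iter m (delta i) (foldr (fun j z => iter (a j) (delta j) z) z s)
  = foldr (fun j z => iter (a j) (delta j) z) (iter m (delta i) z) s.
Proof. elim: s => [//|j s IH] /=; by rewrite iter_comm IH. Qed.

Lemma dpow_add (a b : mindex n) y : dpow delta (madd a b) y = dpow delta a (dpow delta b y).
Proof.
rewrite /dpow; elim: (enum 'I_n) => [//|j s IH] /=.
by rewrite /madd ffunE iterD IH iter_foldr.
Qed.

Lemma dpow_unit i m y : dpow delta (munit i m) y = iter m (delta i) y.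
Proof.
rewrite /dpow.
have H : forall s, foldr (fun j z => iter (munit i m j) (delta j) z) y s
                    = iter (m * count_mem i s) (delta i) y.
  elim=> [|j s IH] /=; first by rewrite muln0.
  rewrite IH /munit ffunE; case: eqP => [->|_]; last by rewrite add0n.
  by rewrite add1n mulnS iterD.
by rewrite H count_uniq_mem ?enum_uniq // mem_enum muln1.
Qed.

Lemma dpow0 y : dpow delta (mzero n) y = y.
Proof. rewrite /dpow; elim: (enum 'I_n) => [//|j s IH] /=; by rewrite /mzero ffunE. Qed.

Lemma dpow_split (b : mindex n) i y :
  dpow delta b y = dpow delta (mset0 b i) (iter (b i) (delta i) y).
Proof.
rewrite {1}(_ : b = madd (mset0 b i) (munit i (b i))) ?dpow_add ?dpow_unit //.
apply/ffunP => j; rewrite !ffunE; case: eqP => [->|] //; by rewrite addn0.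
Qed.

Lemma addf_dpow (a : mindex n) : addf (dpow delta a).
Proof.
rewrite /dpow => y z; elim: (enum 'I_n) => [//|j s IH] /=.
by rewrite IH (addf_iter _ (dadd j)).
Qed.

Lemma delta_dpow i (a : mindex n) y : delta i (dpow delta a y) = dpow delta a (delta i y).
Proof.
have := iter_foldr a i 1 y (enum 'I_n); by rewrite /dpow.
Qed.

Variable mulc : A -> A -> A.
Hypothesis mulc_delta : forall c z i, constants delta c -> delta i (mulc c z) = mulc c (delta i z).

Lemma mulc_dpow c z (a : mindex n) : constants delta c ->
  dpow delta a (mulc c z) = mulc c (dpow delta a z).
Proof.
move=> Hc; rewrite /dpow; elim: (enum 'I_n) => [//|j s IH] /=.
rewrite IH; elim: (a j) => [//|m IHm] /=; by rewrite IHm mulc_delta.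
Qed.

Lemma mulc_iter c z i m : constants delta c ->
  iter m (delta i) (mulc c z) = mulc c (iter m (delta i) z).
Proof. move=> Hc; elim: m => [//|m IHm] /=; by rewrite IHm mulc_delta. Qed.


Variable d : 'I_n -> option nat.
Variable x : mindex n -> A.
Hypothesis Hdesc : descent delta d x.
Hypothesis mulcD : forall c1 c2 z, mulc (c1 + c2) z = mulc c1 z + mulc c2 z.
Hypothesis mulc0l : forall z, mulc 0 z = 0.
Hypothesis mulc0r : forall c, mulc c 0 = 0.
Hypothesis mulc1 : forall c, mulc c 1 = c.
Variable a : mindex n.
Hypothesis Ha : inI d a.

Lemma dx_self b : inI d b -> dpow delta b (x b) = 1.
Proof. by case: Hdesc => H0 H Hb; rewrite H // mle_refl msubxx H0. Qed.

Lemma dx_nle g b : inI d b -> mle g b = false -> dpow delta g (x b) = 0.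
Proof. by case: Hdesc => H0 H Hb Hgb; rewrite H // Hgb. Qed.

Lemma iter_xb b i : mle b a -> iter (a i).+1 (delta i) (x b) = 0.
Proof.
move=> Hba; rewrite -dpow_unit; apply: dx_nle; first exact: inI_mle Hba Ha.
apply/negbTE/negP => /mleP /(_ i); rewrite ffunE eqxx.
move/mleP: Hba => /(_ i) H1 H2; have := leq_trans H2 H1; by rewrite ltnn.
Qed.

Lemma exist_lev k : forall y, Nset delta a y ->
  (forall g, mle g a -> (k <= msz g)%N -> dpow delta g y = 0) ->
  exists c : mindex n -> A, (forall b, constants delta (c b)) /\
    (forall b, (k <= msz b)%N -> c b = 0) /\
    y = \sum_(b <- box a) mulc (c b) (x b).
Proof.
elim: k => [|k IH] y Hy Hz.
  exists (fun _ => 0); split; first by move=> b i; exact: addf0 (dadd i).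
  split => //; have := Hz (mzero n) (mle0 _) (leq0n _); rewrite dpow0 => ->.
  by rewrite big1 // => b _; exact: mulc0l.
pose c0 := fun b => if (msz b == k) && mle b a then dpow delta b y else 0.
have Hc0 : forall b, constants delta (c0 b).
  move=> b i; rewrite /c0; case: ifP => [/andP [/eqP Hk Hba]|_]; last exact: addf0 (dadd i).
  have E : delta i (dpow delta b y) = dpow delta (madd (munit i 1) b) y.
    by rewrite dpow_add dpow_unit.
  case Hle: (mle (madd (munit i 1) b) a).
    rewrite E; apply: Hz => //; by rewrite msz_add msz_unit Hk add1n.
  have Hbi : b i = a i.
    move/negbT: Hle => /forallPn [j]; rewrite !ffunE -ltnNge.
    move/mleP: Hba => Hba; case: (eqVneq j i) => [->|Hji] /=.
      by have := Hba i; lia.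
    by rewrite add0n ltnNge Hba.
  rewrite delta_dpow (dpow_split b i) -iterSr Hbi Hy; exact: addf0 (addf_dpow _).
pose y' := y - \sum_(b <- box a) mulc (c0 b) (x b).
have Hy' : Nset delta a y'.
  move=> i; rewrite /y' (addfB (addf_iter _ (dadd i))) Hy (addf_sum _ _ (addf_iter _ (dadd i))).
  rewrite big1_seq ?subrr // => b /andP [_ Hb].
  by rewrite mulc_iter // iter_xb ?mulc0r // -mem_box.
have Hz' : forall g, mle g a -> (k <= msz g)%N -> dpow delta g y' = 0.
  move=> g Hga Hkg.
  have Hterm : forall b, b \in box a ->
      mulc (c0 b) (dpow delta g (x b)) = if b == g then c0 b else 0.
    move=> b Hb; rewrite mem_box in Hb; have HIb := inI_mle Hb Ha.
    case: (eqVneq b g) => [->|Hne]; first by rewrite dx_self ?mulc1 // (inI_mle Hga Ha).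
    rewrite /c0; case: (eqVneq (msz b) k) => [Hk|Hk] /=; last by rewrite mulc0l.
    rewrite Hb dx_nle ?mulc0r //; apply/negbTE/negP => Hgb.
    have Hgb' := msz_eq Hgb; rewrite Hk in Hgb'; have := Hgb' Hkg => Eg.
    by rewrite Eg eqxx in Hne.
  rewrite /y' (addfB (addf_dpow _)) (addf_sum _ _ (addf_dpow _)).
  rewrite (eq_big_seq (fun b => if b == g then c0 b else 0)); last first.
    by move=> b Hb; rewrite mulc_dpow // Hterm.
  rewrite sum_if1 ?uniq_box // mem_box Hga /c0 Hga andbT.
  case: eqP => [_|Hk]; first by rewrite subrr.
  rewrite subr0; apply: Hz => //; rewrite ltn_neqAle eq_sym Hkg andbT; exact/eqP.
have [c' [Hc' [Hc'0 Ey']]] := IH y' Hy' Hz'.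
exists (fun b => c' b + c0 b); split.
  by move=> b i; rewrite dadd Hc' Hc0 addr0.
split.
  move=> b Hb; rewrite Hc'0 ?(ltnW Hb) // /c0.
  have -> : (msz b == k) = false by apply/negbTE; rewrite neq_ltn Hb orbT.
  by rewrite add0r.
have -> : y = y' + \sum_(b <- box a) mulc (c0 b) (x b) by rewrite /y' subrK.
rewrite Ey' -big_split /=; apply: eq_bigr => b _; by rewrite mulcD.
Qed.

Lemma uniq_lev (z : mindex n -> A) :
  (forall b, b \in box a -> exists c, constants delta c /\ z b = mulc c (x b)) ->
  \sum_(b <- box a) z b = 0 ->
  forall m b, b \in box a -> (msz a < m + msz b)%N -> z b = 0.
Proof.
move=> Hz Hs; elim=> [|m IH] b Hb Hlt.
  by rewrite add0n in Hlt; rewrite mem_box in Hb; have := msz_le Hb; lia.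
case: (ltnP (msz a) (m + msz b)) => [H|H]; first exact: IH.
have [c [Hc Ezb]] := Hz b Hb.
have E : dpow delta b (\sum_(b' <- box a) z b') = c.
  rewrite (addf_sum _ _ (addf_dpow _)) (eq_big_seq (fun b' => if b' == b then c else 0)).
    by rewrite (@sum_if1 _ _ _ _ (fun _ => c)) ?uniq_box // Hb.
  move=> b' Hb'; case: (eqVneq b' b) => [->|Hne].
    by rewrite Ezb mulc_dpow // dx_self ?mulc1 // (inI_mle _ Ha) // -mem_box.
  case: (ltnP (msz b) (msz b')) => [Hl|Hl].
    rewrite IH //; [exact: addf0 (addf_dpow _) | lia].
  have [c' [Hc' Ezb']] := Hz b' Hb'.
  rewrite Ezb' mulc_dpow // dx_nle ?mulc0r //; first by apply: (inI_mle _ Ha); rewrite -mem_box.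
  apply/negbTE/negP => Hbb'; have Heq := msz_eq Hbb' Hl.
  by rewrite Heq eqxx in Hne.
rewrite Hs (addf0 (addf_dpow _)) in E.
by rewrite Ezb -E mulc0l.
Qed.

Lemma dsum_main : is_dsum (Nset delta a) (box a)
   (fun b y => exists c, constants delta c /\ y = mulc c (x b)).
Proof.
split.
  move=> y; split.
    move=> Hy.
    have Hv : forall g, mle g a -> ((msz a).+1 <= msz g)%N -> dpow delta g y = 0.
      by move=> g Hg Hk; have := leq_trans Hk (msz_le Hg); rewrite ltnn.
    have [c [Hc [_ E]]] := @exist_lev (msz a).+1 y Hy Hv.
    exists (fun b => mulc (c b) (x b)); split => // b _; by exists (c b).
  case=> z [Hz ->] i.
  rewrite (addf_sum _ _ (addf_iter _ (dadd i))) big1_seq // => b /andP [_ Hb].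
  have [c [Hc ->]] := Hz b Hb.
  by rewrite mulc_iter // iter_xb ?mulc0r // -mem_box.
move=> z Hz Hs b Hb; apply: (@uniq_lev z Hz Hs (msz a).+1 b Hb); lia.
Qed.

End Der2.

Theorem lemma2p1 (A : pzRingType) (n : nat) (delta : 'I_n -> A -> A)
  (d : 'I_n -> option nat) (x : mindex n -> A) :
  (forall i, is_derivation (delta i)) ->
  (forall i j y, delta i (delta j y) = delta j (delta i y)) ->
  descent delta d x ->
  forall a : mindex n, inI d a ->
    is_dsum (Nset delta a) (box a)
      (fun b y => exists c, constants delta c /\ y = c * x b) /\
    is_dsum (Nset delta a) (box a)
      (fun b y => exists c, constants delta c /\ y = x b * c).
Proof.
move=> Hder Hcomm Hdesc a Ha; split.
- apply: (@dsum_main A n delta Hder Hcomm (fun c z => c * z) _ d x Hdesc _ _ _ _ a Ha).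
  + move=> c z i Hc /=; case: (Hder i) => _ ->; by rewrite Hc mul0r add0r.
  + by move=> c1 c2 z; rewrite mulrDl.
  + by move=> z; rewrite mul0r.
  + by move=> c; rewrite mulr0.
  + by move=> c; rewrite mulr1.
- apply: (@dsum_main A n delta Hder Hcomm (fun c z => z * c) _ d x Hdesc _ _ _ _ a Ha).
  + move=> c z i Hc /=; case: (Hder i) => _ ->; by rewrite Hc mulr0 addr0.
  + by move=> c1 c2 z; rewrite mulrDr.
  + by move=> z; rewrite mulr0.
  + by move=> c; rewrite mul0r.
  + by move=> c; rewrite mul1r.
Qed.
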